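(* Let $v\ge 2$ and $k\ge 3$ be integers with $v\not\equiv 2\pmod 4$. Then there exists an AOA$(1,k-1,k,v)$.
   Context: An orthogonal array OA$(t,k,v)$ (with $1\le t\le k$) is a $v^t\times k$ array with entries from a set $X$ of size $v$ such that, for every choice of $t$ of its columns, each $t$-tuple in $X^t$ appears exactly once as a row of the corresponding $v^t\times t$ subarray. For integers $1\le s\le t\le k$, an augmented orthogonal array AOA$(s,t,k,v)$ is a $v^t\times(k+1)$ array $A$ such that: (1) the first $k$ columns of $A$ form an OA$(t,k,v)$ on a symbol set $X$ of size $v$; (2) the last column of $A$ has entries from a set $Y$ of size $v^{t-s}$; (3) for any choice of $s$ of the first $k$ columns, these $s$ columns together with the last column contain every $(s+1)$-tuple of $X^s\times Y$ exactly once as a row. *)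

(* Defs.v *)
From mathcomp Require Import all_boot.
Set Implicit Arguments. Unset Strict Implicit. Unset Printing Implicit Defensive.

(* Symbol set X is 'I_v; an array with v^t rows and k columns is a function
   'I_(v^t) -> 'I_k -> 'I_v (row index, column index).  "Choosing t of the
   columns" is an injective map c : 'I_t -> 'I_k; the corresponding subarray
   row r is the tuple [ffun i => A r (c i)]. *)

Definition is_OA (t k v : nat) (A : 'I_(v ^ t) -> 'I_k -> 'I_v) : Prop :=
  forall c : 'I_t -> 'I_k, injective c ->
  forall x : {ffun 'I_t -> 'I_v},
    #|[set r : 'I_(v ^ t) | [ffun i => A r (c i)] == x]| = 1.

Definition is_AOA (s t k v : nat) (A : 'I_(v ^ t) -> 'I_k -> 'I_v)
    (L : 'I_(v ^ t) -> 'I_(v ^ (t - s))) : Prop :=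
  @is_OA t k v A /\
  forall c : 'I_s -> 'I_k, injective c ->
  forall (x : {ffun 'I_s -> 'I_v}) (y : 'I_(v ^ (t - s))),
    #|[set r : 'I_(v ^ t) | ([ffun i => A r (c i)] == x) && (L r == y)]| = 1.

Definition AOA_exists (s t k v : nat) : Prop :=
  exists (A : 'I_(v ^ t) -> 'I_k -> 'I_v) (L : 'I_(v ^ t) -> 'I_(v ^ (t - s))),
    @is_AOA s t k v A L.

(* Main.v *)
Require Import Defs.
Set Warnings "-all".
From HB Require Import structures.
From mathcomp Require Import all_boot all_algebra all_field.
Set Implicit Arguments. Unset Strict Implicit. Unset Printing Implicit Defensive.
Import GRing.Theory.
Local Open Scope ring_scope.

Lemma count1 (T1 T2 : finType) (f : T1 -> T2) :
  injective f -> #|T1| = #|T2| -> forall x, #|[set r | f r == x]| = 1%N.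
Proof.
move=> fi hc x.
have /codomP [r0 ->] : x \in codom f by apply: inj_card_onto; rewrite // hc.
rewrite (_ : [set r | f r == f r0] = [set r0]) ?cards1 //.
by apply/setP => r; rewrite !inE (inj_eq fi).
Qed.

Definition P2 (A B : finZmodType) := (A * B)%type.
HB.instance Definition _ (A B : finZmodType) := GRing.Zmodule.on (P2 A B).
HB.instance Definition _ (A B : finZmodType) := Finite.on (P2 A B).

Definition CM (v : nat) : Prop := exists (G : finZmodType) (s : G -> G),
  #|G| = v /\ injective s /\ injective (fun y => y + s y).

Lemma cm_prod v1 v2 : CM v1 -> CM v2 -> CM (v1 * v2).
Proof.
move=> [G1 [s1 [c1 [i1 j1]]]] [G2 [s2 [c2 [i2 j2]]]].
exists (P2 G1 G2), (fun p => (s1 p.1, s2 p.2)); split; first by rewrite card_prod c1 c2.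
split.
  by move=> [a b] [a' b'] [/i1 -> /i2 ->].
by move=> [a b] [a' b'] [/j1 -> /j2 ->].
Qed.

Lemma cm_field (F : finFieldType) : (2 < #|F|)%N -> CM #|F|.
Proof.
move=> hF.
pose S : {set F} := [set 0; -1].
have : (0 < #|~: S|)%N.
  have := cardsC S; rewrite /S cards2.
  case: (_ != _) => /= h; apply: contraLR hF; rewrite -!leqNgt leqn0 => /eqP h0;
  by rewrite -h h0.
case/card_gt0P => c; rewrite !inE negb_or => /andP [c0 c1].
exists F, (fun y => c * y); split => //; split; first exact: mulfI.
have c1' : 1 + c != 0 by rewrite addrC addr_eq0.
have e y : y + c * y = (1 + c) * y by rewrite mulrDl mul1r.
move=> y z /=; rewrite !e; exact: mulfI.
Qed.

Lemma cm_odd n : odd n.+1 -> CM n.+1.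
Proof.
move=> hn; exists 'I_n.+1, id; split; first by rewrite card_ord.
split => //.
suff H : forall y z : 'I_n.+1, (y <= z)%N -> y + y = z + z %[mod n.+1] -> y = z.
  move=> y z /= /(congr1 val) /= e; case: (leqP y z) => h; first exact: H.
  by apply/esym; apply: H (ltnW h) (esym e).
move=> y z le e; apply/val_inj/eqP; rewrite eqn_leq le /=.
have : (n.+1 %| (z + z) - (y + y))%N.
  by rewrite -eqn_mod_dvd ?leq_add // e.
rewrite !addnn -!mul2n -mulnBr Gauss_dvdr ?coprimen2 //.
case: (posnP (z - y)) => [/eqP|hp]; first by rewrite subn_eq0.
move/(dvdn_leq hp) => h; have := leq_ltn_trans h (leq_ltn_trans (leq_subr y z) (ltn_ord z)).
by rewrite ltnn.
Qed.

From mathcomp Require Import zify.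

Definition tau (G : zmodType) (s : G -> G) (m : nat) (y : G) :=
  if odd m then - y else s y.
Definition sg (G : zmodType) (s : G -> G) (m : nat) (i : 'I_m.+1) (y : G) :=
  if i == ord_max then tau s m y else if odd i then - y else y.
Definition colv (G : zmodType) (m : nat) (j : 'I_m.+3) (x : {ffun 'I_m.+2 -> G}) : G :=
  if (j < m.+2)%N then x (inord j) else \sum_i x i.
Definition lv (G : zmodType) (s : G -> G) (m : nat) (x : {ffun 'I_m.+2 -> G}) :
  {ffun 'I_m.+1 -> G} :=
  [ffun i => x (widen_ord (leqnSn _) i) - sg s i (x ord_max)].

Lemma sum_alt (G : zmodType) (y : G) n :
  \sum_(i < n) (if odd i then - y else y) = if odd n then y else 0.
Proof.
elim: n => [|n IH]; rewrite ?big_ord0 // big_ord_recr /= IH.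
by case: (odd n) => /=; [rewrite subrr | rewrite add0r].
Qed.

Lemma sg_inj (G : zmodType) (s : G -> G) m i : injective s -> injective (sg s (m:=m) i).
Proof.
move=> si y z; rewrite /sg /tau; case: (_ == _); case: (odd _) => //; first [exact: oppr_inj | exact: si].
Qed.

Lemma sum_sg (G : zmodType) (s : G -> G) m y :
  \sum_(i < m.+1) sg s i y + y = if odd m then y else y + s y.
Proof.
rewrite big_ord_recr /= {2}/sg eqxx.
rewrite (eq_bigr (fun i : 'I_m => if odd i then -y else y)); last first.
  move=> i _; rewrite /sg ifN //.
  by rewrite -(inj_eq val_inj) /= neq_ltn ltn_ord.
rewrite sum_alt /tau; case: (odd m).
  by rewrite subrr add0r.
by rewrite add0r addrC.
Qed.

Lemma f_inj (G : zmodType) (s : G -> G) m :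
  injective (fun y => y + s y) -> injective (fun y => \sum_(i < m.+1) sg s i y + y).
Proof.
move=> ci y z /=; rewrite !sum_sg; case: (odd m) => //; exact: ci.
Qed.

Lemma miss m (c : 'I_m.+2 -> 'I_m.+3) (j1 j2 : 'I_m.+3) :
  injective c -> j1 != j2 -> (j1 \in codom c) || (j2 \in codom c).
Proof.
move=> ci jne; apply/norP => [[h1 h2]].
have sub : codom c \subset ~: [set j1; j2].
  apply/subsetP => j hj; rewrite !inE; apply/norP; split; apply/eqP => ej.
    by subst j; rewrite hj in h1.
  by subst j; rewrite hj in h2.
have := subset_leq_card sub; rewrite card_codom // card_ord.
have := cardsC [set j1; j2]; rewrite cards2 jne card_ord /=.
lia.
Qed.

Lemma oa_inj (G : zmodType) m (c : 'I_m.+2 -> 'I_m.+3) : injective c ->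
  forall x1 x2 : {ffun 'I_m.+2 -> G}, (forall i, colv (c i) x1 = colv (c i) x2) -> x1 = x2.
Proof.
move=> ci x1 x2 e.
have ag : forall j, j \in codom c -> colv j x1 = colv j x2 by move=> j /codomP [i ->].
have col_w : forall (x : {ffun 'I_m.+2 -> G}) i, colv (widen_ord (leqnSn _) i) x = x i.
  by move=> x i; rewrite /colv /= ltn_ord inord_val.
apply/ffunP => i0; apply/eqP; apply: contraT => hne.
pose j0 : 'I_m.+3 := widen_ord (leqnSn _) i0.
have nj0 : j0 \notin codom c.
  by apply/negP => /ag; rewrite !col_w => /eqP; apply/negP.
have oth : forall i, i != i0 -> x1 i = x2 i.
  move=> i hi; have : (widen_ord (leqnSn _) i \in codom c) || (j0 \in codom c).
    apply: miss => //; apply/negP => /eqP /(congr1 val) /= /val_inj /eqP; exact/negP.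
  by rewrite (negbTE nj0) orbF => /ag; rewrite !col_w.
have : (ord_max \in codom c) || (j0 \in codom c).
  by apply: miss => //; rewrite -(inj_eq val_inj) /= neq_ltn ltn_ord orbT.
rewrite (negbTE nj0) orbF => /ag; rewrite /colv /= ltnn.
rewrite (bigD1 i0) // [in RHS](bigD1 i0) //= (eq_bigr _ (fun i hi => oth i hi)).
by move/addIr => h; rewrite h eqxx in hne.
Qed.

Lemma aoa_inj (G : zmodType) (s : G -> G) m : injective s -> injective (fun y => y + s y) ->
  forall (j : 'I_m.+3) (x1 x2 : {ffun 'I_m.+2 -> G}),
  colv j x1 = colv j x2 -> lv s x1 = lv s x2 -> x1 = x2.
Proof.
move=> si ci j x1 x2 ej el.
have el' i : x1 (widen_ord (leqnSn _) i) - sg s i (x1 ord_max)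
           = x2 (widen_ord (leqnSn _) i) - sg s i (x2 ord_max).
  by have := congr1 (fun f : {ffun _ -> _} => f i) el; rewrite !ffunE.
have lw (i : 'I_m.+1) : lift ord_max i = widen_ord (leqnSn _) i.
  by apply/val_inj; rewrite /= /bump leqNgt ltn_ord.
suff ey : x1 ord_max = x2 ord_max.
  apply/ffunP => i0; case: (unliftP ord_max i0) => [i ->|->] //.
  by move: (el' i); rewrite ey lw => /addIr.
move: ej; rewrite /colv; case: ifP => hj ej.
  move: ej; set i0 := inord j; case: (unliftP ord_max i0) => [i ->|->] //.
  rewrite lw => ej; move: (el' i); rewrite ej => /addrI /oppr_inj; exact: sg_inj.
have hs (x : {ffun 'I_m.+2 -> G}) : \sum_(i < m.+1) x (widen_ord (leqnSn _) i)
    = \sum_(i < m.+1) lv s x i + \sum_(i < m.+1) sg s i (x ord_max).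
  rewrite (eq_bigr (fun i => lv s x i + sg s i (x ord_max))); first by rewrite big_split.
  by move=> i _; rewrite ffunE subrK.
move: ej; rewrite big_ord_recr [in RHS]big_ord_recr /= !hs el -!addrA => /addrI.
exact: (f_inj ci).
Qed.

Lemma aoa_main (G : finZmodType) (s : G -> G) m : injective s -> injective (fun y => y + s y) ->
  AOA_exists 1 (m.+3 - 1) m.+3 #|G|.
Proof.
move=> si ci.
set v := #|G|.
have cR : #|{ffun 'I_m.+2 -> G}| = (v ^ m.+2)%N by rewrite card_ffun card_ord.
have cL : #|{ffun 'I_m.+1 -> G}| = (v ^ m.+1)%N by rewrite card_ffun card_ord.
pose dec (r : 'I_((v ^ m.+2)%N)) : {ffun 'I_m.+2 -> G} := enum_val (cast_ord (esym cR) r).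
have decI : injective dec by move=> r1 r2 /enum_val_inj /cast_ord_inj.
pose encL (l : {ffun 'I_m.+1 -> G}) : 'I_((v ^ m.+1)%N) := cast_ord cL (enum_rank l).
exists (fun r j => enum_rank (colv j (dec r))), (fun r => encL (lv s (dec r))).
split.
  move=> c cI x.
  apply: (count1 (f := fun r => [ffun i => enum_rank (colv (c i) (dec r))])).
    move=> r1 r2 /ffunP e; apply: decI; apply: (oa_inj cI) => i.
    by have := e i; rewrite !ffunE => /enum_rank_inj.
  by rewrite card_ffun !card_ord.
move=> c cI x y.
have -> : [set r | ([ffun i => enum_rank (colv (c i) (dec r))] == x) && (encL (lv s (dec r)) == y)]
  = [set r | ([ffun i => enum_rank (colv (c i) (dec r))], encL (lv s (dec r))) == (x, y)].
  by apply/setP => r; rewrite !inE.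
apply: count1.
  move=> r1 r2 [/ffunP e1 e2]; have e3 := enum_rank_inj (ord_inj e2); apply: decI.
  apply: (aoa_inj si ci _ e3 (j := c ord0)).
  by have := e1 ord0; rewrite !ffunE => /enum_rank_inj.
by rewrite card_prod card_ffun !card_ord expn1 -expnS.
Qed.

Local Close Scope ring_scope.
Lemma cm_main v : (2 <= v)%N -> v %% 4 != 2 -> CM v.
Proof.
move=> hv h4.
case hodd: (odd v).
  by case: v hv h4 hodd => [|n] // _ _; exact: cm_odd.
have v0 : (0 < v)%N by lia.
have [o co ev] := pfactor_coprime (isT : prime 2) v0.
have m2 : v %% 2 = 0 by rewrite modn2 hodd.
have a2 : (2 <= logn 2 v)%N.
  by rewrite -pfactor_dvdn //; rewrite /dvdn; lia.
have a0 : (0 < logn 2 v)%N by lia.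
have [F _ cF] := pPrimePowerField (isT : prime 2) a0.
have oo : odd o by rewrite -coprime2n.
case: o co ev oo => [|o'] // co ev oo.
rewrite ev mulnC -cF.
apply: cm_prod; last exact: cm_odd.
apply: cm_field; rewrite cF.
apply: leq_trans (_ : 2 ^ 2 <= 2 ^ logn 2 v)%N => //; by rewrite leq_exp2l.
Qed.

Theorem theorem2p3 (v k : nat) :
  2 <= v -> 3 <= k -> v %% 4 != 2 -> AOA_exists 1 (k - 1) k v.
Proof.
move=> hv hk h4.
have [G [s [cG [si ci]]]] := cm_main hv h4.
case: k hk => [|[|[|m]]] // _.
rewrite -cG; exact: aoa_main si ci.
Qed.
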